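(* Let $\mathcal{S}$ be a finite set with $|\mathcal{S}| = S$, let $d_\pi$ be a categorical distribution on $\mathcal{S}$ (the state distribution induced by a policy $\pi$), and let $d_n$ be the empirical distribution obtained from $n$ independent samples drawn from $d_\pi$, i.e. $d_n(s) = \frac{1}{n}\sum_{j=1}^n \mathbf{1}(X_j = s)$ with $X_1,\dots,X_n$ i.i.d. with law $d_\pi$. Then, for any $\epsilon > 0$, $$\mathbb{P}\left( \mathcal H(d_\pi)-\mathcal H(d_n)>\epsilon \right) \leq 2S \exp\left(-n\frac{\epsilon^2\,\mathrm{Var}(d_\pi)}{2S^3\,\mathcal H^2(d_\pi)}\right),$$ where $\mathcal H(p) = -\sum_{s\in\mathcal S} p(s)\log p(s)$ is the Shannon entropy and $\mathrm{Var}(d_\pi) = \sum_{s\in\mathcal S} d_\pi(s)(1-d_\pi(s))$. Furthermore, to ensure this concentration with confidence $1-\delta$ (i.e. $\mathbb{P}( \mathcal H(d_\pi)-\mathcal H(d_n)>\epsilon ) \le \delta$), it suffices that the number of samples satisfies $$n \geq \frac{2S^3 \mathcal{H}^2(d_\pi)}{\epsilon^2 \mathrm{Var}(d_\pi)} \cdot \ln\frac{2S}{\delta}.$$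
   Context: $\mathcal H$ denotes Shannon entropy of a distribution on the finite set $\mathcal S$; $\mathrm{Var}(d_\pi)=\sum_{s} d_\pi(s)(1-d_\pi(s))$ is the (total) variance associated with the categorical distribution $d_\pi$. The samples are assumed independent. *)

(* Defs.v *)
From HB Require Import structures.
From mathcomp Require Import all_boot all_order all_algebra.
From mathcomp Require Import all_classical all_reals all_analysis.
Set Implicit Arguments. Unset Strict Implicit. Unset Printing Implicit Defensive.
Import Order.TTheory GRing.Theory Num.Theory.
Local Open Scope ring_scope.

(* Shannon entropy (natural log); convention 0 log 0 = 0 holds since ln 0 = 0. *)
Definition entropy (R : realType) (T : finType) (p : T -> R) : R :=
  - \sum_(s : T) p s * ln (p s).

Definition cat_var (R : realType) (T : finType) (p : T -> R) : R :=
  \sum_(s : T) p s * (1 - p s).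

Definition empirical (R : realType) (T : finType) (n : nat)
  (x : {ffun 'I_n -> T}) : T -> R :=
  fun s => (#|[set j | x j == s]|)%:R / n%:R.

Definition iid_prob (R : realType) (T : finType) (d : T -> R) (n : nat)
  (E : pred {ffun 'I_n -> T}) : R :=
  \sum_(x : {ffun 'I_n -> T} | E x) \prod_(j < n) d (x j).

(* Main.v *)
Require Import Defs.
From HB Require Import structures.
From mathcomp Require Import all_boot all_order all_algebra.
From mathcomp Require Import all_classical all_reals all_analysis.
From mathcomp Require Import ring lra.
Import Order.TTheory GRing.Theory Num.Theory.
Local Open Scope ring_scope.
Import numFieldNormedType.Exports.

Section Calc.
Local Open Scope classical_set_scope.

Variable R : realType.

Lemma expR_ge_quad (x : R) : 0 <= x -> 1 + x + x^+2/2 <= expR x.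
Proof.
move=> x0.
pose f : R -> R := (expR : R -> R) - (cst 1 + id + (id ^+ 2) * cst (2^-1)).
have df : forall t : R, is_derive t (1:R) f (expR t - (1 + t)).
  move=> t; rewrite /f; apply: is_derive_eq.
  rewrite scaler0 add0r expr1 /GRing.scale /= add0r mulr1 mulrA mulVf ?mul1r //.

have cf : {within `[0, x], continuous f}.
  apply: derivable_within_continuous => t _.
  by apply: ex_derive; apply: df.
have [c /andP[c0 cx] E] := MVT_segment x0 (fun t _ => df t) cf.
have : 0 <= f x - f 0.
  rewrite E; apply: mulr_ge0; last by rewrite subr0.
  by rewrite subr_ge0 expR_ge1Dx.
rewrite /f !fctE /= expR0 expr0n /=.
move=> H; lra.
Qed.


Lemma ln_le_sym (s : R) : 1 <= s -> 2 * ln s <= s - s^-1.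
Proof.
move=> s1.
pose f : R -> R := id - (fun y => (id y)^-1) - (2 : R) *: (@ln R).
have df : forall t : R, 0 < t -> is_derive t (1:R) f (1 + t^-2 - 2 * t^-1).
  move=> t t0; rewrite /f.
  have i1 : is_derive t (1:R) (fun y => (id y)^-1) (- (id t) ^- 2 *: 1).
    by apply: is_deriveV; rewrite /= gt_eqF.
  have i2 : is_derive t (1:R) (@ln R) t^-1 by apply: is_derive1_ln.
  apply: is_derive_eq.
  rewrite /GRing.scale /= mulr1; lra.
have cf : {within `[1, s], continuous f}.
  apply: derivable_within_continuous => t tin.
  have t1 : 1 <= t by rewrite (itvP tin).
  by apply: ex_derive; apply: df; lra.
have df' : forall t, t \in `]1, s[%R -> is_derive t (1:R) f (1 + t^-2 - 2 * t^-1).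
  move=> t tin; have t1 : 1 < t by rewrite (itvP tin).
  by apply: df; lra.
have [c /andP[c0 cx] E] := MVT_segment s1 df' cf.
have c1 : 1 <= c by move: c0; rewrite bnd_simp.
have : 0 <= f s - f 1.
  rewrite E; apply: mulr_ge0; last by lra.
  have cp : 0 < c by lra.
  have -> : 1 + c^-2 - 2 * c^-1 = (1 - c^-1)^+2.
    by rewrite sqrrB expr1n mul1r exprVn mulr2n -mulr2n mulr_natl; lra.
  exact: sqr_ge0.
rewrite /f !fctE /= ln1 invr1 /GRing.scale /=. lra.
Qed.
End Calc.


Section Chernoff.
Variables (R : realType) (T : finType) (d : T -> R).
Hypothesis hd0 : forall s, 0 <= d s.
Hypothesis hd1 : \sum_(s : T) d s = 1.
Variable n : nat.

Definition cnt (x : {ffun 'I_n -> T}) (s : T) : nat := #|[set j | x j == s]|.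

Lemma cntE x s : (cnt x s)%:R = \sum_(j < n) ((x j == s)%:R : R).
Proof.
rewrite /cnt -sum1_card natr_sum big_mkcond /=.
by apply: eq_bigr => j _; rewrite inE; case: (x j == s).
Qed.

Lemma chernoff_low (s : T) (lam k : R) : 0 <= lam ->
  \sum_(x : {ffun 'I_n -> T} | (cnt x s)%:R <= k) \prod_(j < n) d (x j)
  <= expR (lam * k) * (1 + d s * (expR (- lam) - 1)) ^+ n.
Proof.
move=> lam0.
have wge0 : forall x : {ffun 'I_n -> T}, 0 <= \prod_(j < n) d (x j).
  by move=> x; apply: prodr_ge0 => j _; exact: hd0.
apply: (@le_trans _ _ (\sum_(x : {ffun 'I_n -> T})
   \prod_(j < n) d (x j) * expR (lam * (k - (cnt x s)%:R)))).
  rewrite [leRHS](bigID (fun x : {ffun 'I_n -> T} => (cnt x s)%:R <= k)) /=.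
  rewrite -[leLHS]addr0; apply: lerD.
    apply: ler_sum => x hx; rewrite -[leLHS]mulr1; apply: ler_wpM2l => //.
    apply: le_trans (expR_ge1Dx _); rewrite lerDl mulr_ge0 // subr_ge0.
    exact: hx.
  by apply: sumr_ge0 => x _; rewrite mulr_ge0 // expR_ge0.
have E1 : forall x : {ffun 'I_n -> T},
   \prod_(j < n) d (x j) * expR (lam * (k - (cnt x s)%:R)) =
   expR (lam * k) * \prod_(j < n) (d (x j) * expR (- lam * (x j == s)%:R)).
  move=> x; rewrite big_split /= -expR_sum -mulr_sumr -cntE.
  by rewrite mulrCA -expRD mulrBr mulNr.
rewrite (eq_bigr _ (fun x _ => E1 x)) -mulr_sumr.
rewrite -(bigA_distr_bigA (fun (j : 'I_n) (t : T) => d t * expR (- lam * (t == s)%:R))) /=.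
rewrite prodr_const card_ord.
have -> : \sum_(t : T) d t * expR (- lam * (t == s)%:R) = 1 + d s * (expR (- lam) - 1).
  rewrite (bigD1 s) //= eqxx mulr1.
  rewrite (eq_bigr d) => [|t /negbTE ->]; last by rewrite mulr0 expR0 mulr1.
  have := hd1; rewrite (bigD1 s) //= => h.
  have -> : \sum_(i | i != s) d i = 1 - d s by rewrite -h; lra.
  by rewrite mulrBr mulr1; lra.
by [].
Qed.

Lemma expN_le (lam : R) : 0 <= lam -> expR (- lam) <= 1 - lam + lam^+2/2.
Proof.
move=> l0.
have q0 : 0 < 1 + lam + lam^+2/2.
  have : 0 <= lam^+2/2 by rewrite divr_ge0 // sqr_ge0.
  lra.
apply: le_trans (_ : _ <= (1 + lam + lam^+2/2)^-1) _.
  rewrite expRN lef_pV2 ?posrE ?expR_gt0 //.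
  exact: expR_ge_quad.
rewrite -div1r ler_pdivrMr //.
have h : 0 <= lam^+4 by rewrite exprn_ge0.
have -> : (1 - lam + lam ^+ 2 / 2) * (1 + lam + lam ^+ 2 / 2) = 1 + lam^+4/4.
  by field.
have : 0 <= lam^+4/4 by rewrite divr_ge0.
lra.
Qed.

Lemma d_le1 s : d s <= 1.
Proof.
rewrite -hd1 (bigD1 s) //= lerDl; apply: sumr_ge0 => i _; exact: hd0.
Qed.

Lemma chernoff_tail (s : T) (a : R) : 0 < d s -> 0 <= a ->
  \sum_(x : {ffun 'I_n -> T} | (cnt x s)%:R <= n%:R * (d s - a))
     \prod_(j < n) d (x j)
  <= expR (- (n%:R * (a^+2 / (2 * d s)))).
Proof.
move=> p0 a0.
set p := d s.
have lam0 : 0 <= a / p by rewrite divr_ge0 // ltW.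
apply: le_trans ((@chernoff_low s (a / p) (n%:R * (p - a)) lam0)) _.
have p1 : p <= 1 by exact: d_le1.
have e0 := expR_ge0 (- (a / p)).
have base0 : 0 <= 1 + p * (expR (- (a / p)) - 1).
  have : 0 <= p * expR (- (a / p)) by rewrite mulr_ge0 // ltW.
  lra.
apply: le_trans (_ : _ <= expR (a / p * (n%:R * (p - a))) *
     expR (p * (expR (- (a / p)) - 1)) ^+ n) _.
  apply: ler_wpM2l; first exact: expR_ge0.
  apply: lerXn2r; rewrite ?nnegrE ?expR_ge0 //.
  exact: expR_ge1Dx.
rewrite -expRM_natr -expRD ler_expR.
have hE := @expN_le (a / p) lam0.
have n0 : 0 <= (n%:R : R) by rewrite ler0n.
apply: le_trans (_ : _ <= a / p * (n%:R * (p - a)) +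
    p * (- (a / p) + (a / p)^+2 / 2) * n%:R) _.
  rewrite lerD2l; apply: ler_wpM2r => //; apply: ler_wpM2l; first exact: ltW.
  lra.
have pn0 : p != 0 by rewrite gt_eqF.
rewrite le_eqVlt; apply/orP; left; apply/eqP; field => //.
Qed.

End Chernoff.
Arguments cnt {T n}.

Section Det.
Variable R : realType.

Lemma ln_le_sub1 (x : R) : 0 < x -> ln x <= x - 1.
Proof.
move=> x0; have h := @le_ln1Dx R (x - 1).
have e : 1 + (x - 1) = x by ring.
rewrite e in h; apply: h; lra.
Qed.

Lemma ln_div_le (y p : R) : 0 < y -> 0 < p -> ln y - ln p <= y / p - 1.
Proof.
move=> y0 p0; rewrite -ln_div ?posrE //; apply: ln_le_sub1; exact: divr_gt0.
Qed.

Lemma term_bound (p y a c : R) : 0 <= p -> p <= 1 -> 0 <= y -> y <= 1 ->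
  0 <= a -> 0 <= c -> a^+2 = 2 * c * p ->
  (p = 0 -> y = 0) -> (0 < p -> p - a < y) ->
  y * ln y - p * ln p - (y - p) <= a * (- ln p) + 2 * c.
Proof.
move=> p0 p1 y0 y1 a0 c0 ha hz hlt.
have L0 : 0 <= - ln p by rewrite oppr_ge0 ln_le0.
have R0 : 0 <= a * (- ln p) + 2 * c by apply: addr_ge0; [exact: mulr_ge0|lra].
have [pz|pp] := eqVneq p 0.
  by rewrite (hz pz) pz !mul0r !subr0; rewrite pz in R0.
have pp0 : 0 < p by rewrite lt_def pp.
have hl := hlt pp0.
have [yp|yp] := leP p y.
  have y0' : 0 < y by apply: lt_le_trans yp.
  have h1 : p * (ln y - ln p) <= y - p.
    have := @ln_div_le y p y0' pp0.
    move=> h; apply: le_trans (ler_wpM2l p0 h) _.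
    rewrite mulrBr mulr1 mulrCA divff ?mulr1 //.
  have h2 : (y - p) * ln y <= 0.
    by apply: mulr_ge0_le0; [lra| exact: ln_le0].
  have E : y * ln y - p * ln p - (y - p) = (y - p) * ln y + p * (ln y - ln p) - (y - p).
    by ring.
  rewrite E; lra.
have La : (p - y) * (- ln p) <= a * (- ln p) by apply: ler_wpM2r => //; lra.
have sq : (p - y)^+2 <= a^+2 by apply: lerXn2r; rewrite ?nnegrE; lra.
have sq2 : (p - y)^+2 / p <= 2 * c.
  by rewrite ler_pdivrMr // -ha.
have [yz|yn] := eqVneq y 0.
  rewrite yz subr0 in sq2; rewrite yz mul0r.
  have e : p ^+ 2 / p = p by rewrite expr2 -mulrA divff ?mulr1.
  rewrite e in sq2.
  have E : 0 - p * ln p - (0 - p) = p * (- ln p) + p by ring.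
  rewrite E.
  have : p * (- ln p) <= a * (- ln p) by apply: ler_wpM2r => //; lra.
  lra.
have y0' : 0 < y by rewrite lt_def yn.
have h1 : y * (ln y - ln p) <= y * (y / p - 1) by apply: ler_wpM2l => //; exact: ln_div_le.
have E1 : y * (y / p - 1) - y + p = (p - y)^+2 / p by field.
have E : y * ln y - p * ln p - (y - p) = y * (ln y - ln p) + (p - y) * (- ln p) - y + p.
  by ring.
rewrite E; lra.
Qed.

Lemma det_bound (T : finType) (p y : T -> R) (c : R) :
  (forall s, 0 <= p s) -> \sum_s p s = 1 ->
  (forall s, 0 <= y s) -> \sum_s y s = 1 -> 0 <= c ->
  (forall s, p s = 0 -> y s = 0) ->
  (forall s, 0 < p s -> p s - Num.sqrt (2 * c * p s) < y s) ->
  entropy p - entropy y <= \sum_s (Num.sqrt (2 * c * p s) * (- ln (p s)) + 2 * c).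
Proof.
move=> p0 p1 y0 y1 c0 hz hlt.
have le1 : forall (f : T -> R) s, (forall s, 0 <= f s) -> \sum_s f s = 1 -> f s <= 1.
  move=> f s f0 f1; rewrite -f1 (bigD1 s) //= lerDl; apply: sumr_ge0 => i _; exact: f0.
have -> : entropy p - entropy y = \sum_s (y s * ln (y s) - p s * ln (p s) - (y s - p s)).
  have e1 : \sum_s (y s - p s) = 0 by rewrite sumrB y1 p1 subrr.
  transitivity (\sum_s (y s * ln (y s)) - \sum_s (p s * ln (p s)) - \sum_s (y s - p s)).
    rewrite e1 subr0 /entropy; ring.
  by rewrite -!sumrB.
apply: ler_sum => s _; apply: term_bound => //; try (by apply: le1).
- by rewrite sqr_sqrtr // mulr_ge0 // mulr_ge0.
- exact: hz.
- exact: hlt.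
Qed.
End Det.

Section Analytic.
Variable R : realType.

Lemma c1 (sg : R) : 0 <= sg -> 2 <= sg^+2 -> sg + 17/12 * (sg^+2 - 2) + 1 <= sg^+2 * sg.
Proof. move=> h0 h2. nra. Qed.
Lemma c2 (sg : R) : 0 <= sg -> 2 <= sg^+2 -> 17/12 * (sg^+2/2 + (sg^+2 - 2)) + 1 <= sg^+2 * sg.
Proof. move=> h0 h2. have t0 : 7/5 <= sg by nra.
have t3 : 0 <= (sg - 7/5)^+3 by rewrite exprn_ge0 // subr_ge0.
have t2 : 0 <= (sg - 7/5 - 1/50)^+2 by rewrite sqr_ge0.
nra. Qed.

Lemma K1 (m p : R) : 0 < p -> p <= m ->
  Num.sqrt m * Num.sqrt p * (ln m - ln p) <= m - p.
Proof.
move=> p0 pm.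
have m0 : 0 < m by apply: lt_le_trans pm.
set u := Num.sqrt m; set v := Num.sqrt p.
have u0 : 0 < u by rewrite sqrtr_gt0.
have v0 : 0 < v by rewrite sqrtr_gt0.
have um : u^+2 = m by rewrite sqr_sqrtr // ltW.
have vp : v^+2 = p by rewrite sqr_sqrtr // ltW.
have vu : v <= u by rewrite ler_sqrt // ltW.
have lnm : ln m = 2 * ln u by rewrite -um lnXn // mulr_natl.
have lnp : ln p = 2 * ln v by rewrite -vp lnXn // mulr_natl.
have h : 2 * ln (u / v) <= u / v - (u / v)^-1.
  apply: ln_le_sym; rewrite ler_pdivlMr // mul1r //.
rewrite ln_div ?posrE // in h.
rewrite lnm lnp -um -vp.
have e : u * v * (u / v - (u / v)^-1) = u^+2 - v^+2.
  rewrite invf_div; field; apply/andP; split; exact: lt0r_neq0.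
rewrite -e; apply: ler_wpM2l; first by apply: mulr_ge0; exact: ltW.
lra.
Qed.

Lemma analytic (T : finType) (p : T -> R) :
  (forall s, 0 <= p s) -> \sum_s p s = 1 -> (1 < #|T|)%N ->
  Num.sqrt (cat_var p) * \sum_s (Num.sqrt (p s) * (- ln (p s))) + cat_var p
   <= (#|T|)%:R * Num.sqrt (#|T|)%:R * entropy p.
Proof.
move=> p0 p1 T2.
have [i0 _] : exists i0 : T, true.
  by move/card_gt1P: T2 => [x [y [_ _ _]]]; exists x.
have [s0 _ hmax] := @arg_maxP _ R T i0 predT p isT.
set q := p s0.
set m := 1 - q.
have hmax' : forall s, p s <= q by move=> s; exact: hmax.
have hm : m = \sum_(s | s != s0) p s by rewrite /m /q -p1 (bigD1 s0) //=; ring.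
have q0 : 0 <= q := p0 s0.
have F2 : forall s, s != s0 -> p s <= m.
  move=> s ss; rewrite hm (bigD1 s) //= lerDl; apply: sumr_ge0 => i _; exact: p0.
have m0 : 0 <= m by rewrite hm; apply: sumr_ge0 => i _; exact: p0.
have m1 : m <= 1 by rewrite /m; lra.
set S := (#|T|)%:R : R.
have S2 : 2 <= S by rewrite /S (ler_nat R 2).
have F1 : 1 <= S * q.
  rewrite -p1; apply: le_trans (_ : _ <= \sum_(s : T) q) _.
    by apply: ler_sum => s _; exact: hmax'.
  by rewrite sumr_const /S mulr_natl.
set V := cat_var p.
set H := entropy p.
set L := fun s => - ln (p s).
have q1 : q <= 1 by move: m0; rewrite /m; lra.
have p1' : forall s, p s <= 1 by move=> s; apply: le_trans (hmax' s) q1.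
have L0 : forall s, 0 <= L s by move=> s; rewrite /L oppr_ge0 ln_le0.
have F4 : m <= V.
  apply: le_trans (_ : _ <= \sum_s p s * (1 - q)) _.
    by rewrite -mulr_suml p1 mul1r.
  rewrite /V /cat_var; apply: ler_sum => s _; apply: ler_wpM2l => //.
  have := hmax' s; lra.
have F3 : V <= 2 * m.
  rewrite /V /cat_var (bigD1 s0) //=.
  have h : \sum_(s | s != s0) p s * (1 - p s) <= \sum_(s | s != s0) p s.
    apply: ler_sum => s _; rewrite -[leRHS]mulr1; apply: ler_wpM2l => //.
    have := p0 s; lra.
  rewrite -hm in h.
  have h2 : q * (1 - q) <= m by rewrite -/m -[leRHS]mul1r; apply: ler_wpM2r.
  rewrite -/q; lra.
have F6 : V <= 1.
  rewrite -p1 /V /cat_var; apply: ler_sum => s _; rewrite -[leRHS]mulr1.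
  apply: ler_wpM2l => //; have := p0 s; lra.
have HE : H = \sum_s p s * L s.
  by rewrite /H /entropy -sumrN; apply: eq_bigr => s _; rewrite /L mulrN.
have F5 : V <= H.
  rewrite HE /V /cat_var; apply: ler_sum => s _; rewrite /L.
  have [ps0|psn] := eqVneq (p s) 0; first by rewrite ps0 !mul0r.
  have pp : 0 < p s by rewrite lt_def psn p0.
  apply: ler_wpM2l => //; have := @ln_le_sub1 R (p s) pp; lra.
set A := q * L s0.
set B := \sum_(s | s != s0) p s * L s.
have HAB : H = A + B by rewrite HE (bigD1 s0).
have A0 : 0 <= A by apply: mulr_ge0.
have B0 : 0 <= B by apply: sumr_ge0 => s _; apply: mulr_ge0.
set l := - ln m.
have l0 : 0 <= l by rewrite /l oppr_ge0 ln_le0.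
have mlB : m * l <= B.
  rewrite hm mulr_suml; apply: ler_sum => s ss.
  have [ps0|psn] := eqVneq (p s) 0; first by rewrite ps0 !mul0r.
  have pp : 0 < p s by rewrite lt_def psn p0.
  apply: ler_wpM2l => //; rewrite /l /L lerN2.
  rewrite ler_ln ?posrE //; first exact: F2.
  by apply: lt_le_trans (F2 s ss).
pose sg : R := Num.sqrt S.
have sg0 : 0 <= sg by exact: sqrtr_ge0.
have sgS : sg ^+ 2 = S by rewrite sqr_sqrtr // /S ler0n.
pose r2 : R := Num.sqrt 2.
have r20 : 0 <= r2 by exact: sqrtr_ge0.
have r2le : r2 <= 17/12.
  have h : (0:R) <= 17/12 by lra.
  rewrite /r2 -[leRHS](ger0_norm h) -sqrtr_sqr ler_sqrt ?sqr_ge0 //.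
  rewrite expr2; lra.
have T0 : Num.sqrt V * Num.sqrt q * L s0 <= sg * A.
  have sV1 : Num.sqrt V <= 1 by rewrite -sqrtr1 ler_sqrt //.
  have sq : Num.sqrt q <= sg * q.
    rewrite -(@ger0_norm _ (sg * q)) ?mulr_ge0 // -sqrtr_sqr ler_sqrt ?sqr_ge0 //.
    rewrite exprMn sgS; nra.
  rewrite /A mulrA; apply: ler_wpM2r => //.
  rewrite -[sg * q]mul1r; apply: ler_pM => //; exact: sqrtr_ge0.
have T1 : forall s, s != s0 ->
    Num.sqrt V * Num.sqrt (p s) * L s <= r2 * ((m + p s) / 2 * l + (m - p s)).
  move=> s ss.
  have psm := F2 s ss.
  have [ps0|psn] := eqVneq (p s) 0.
    rewrite ps0 sqrtr0 mulr0 mul0r; apply: mulr_ge0 => //.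
    apply: addr_ge0; last by lra.
    by apply: mulr_ge0 => //; apply: divr_ge0; lra.
  have pp : 0 < p s by rewrite lt_def psn p0.
  have mp : 0 < m by apply: lt_le_trans psm.
  have sV : Num.sqrt V <= r2 * Num.sqrt m.
    by rewrite /r2 -sqrtrM // ler_sqrt // mulr_ge0 //; lra.
  have k1 := @K1 m (p s) pp psm.
  have am : Num.sqrt m * Num.sqrt (p s) <= (m + p s) / 2.
    have e1 : Num.sqrt m ^+ 2 = m by rewrite sqr_sqrtr // ltW.
    have e2 : Num.sqrt (p s) ^+ 2 = p s by rewrite sqr_sqrtr // ltW.
    have : 0 <= (Num.sqrt m - Num.sqrt (p s)) ^+ 2 by apply: sqr_ge0.
    rewrite sqrrB e1 e2; lra.
  apply: le_trans (_ : _ <= r2 * Num.sqrt m * Num.sqrt (p s) * L s) _.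
    apply: ler_wpM2r => //; apply: ler_wpM2r => //; exact: sqrtr_ge0.
  have eL : L s = l + (ln m - ln (p s)) by rewrite /L /l; ring.
  rewrite eL -!mulrA; apply: ler_wpM2l => //.
  have e : Num.sqrt m * (Num.sqrt (p s) * (l + (ln m - ln (p s)))) =
     Num.sqrt m * Num.sqrt (p s) * l + Num.sqrt m * Num.sqrt (p s) * (ln m - ln (p s)).
    by ring.
  rewrite e; have := ler_wpM2r l0 am; lra.
have cm : \sum_(s | s != s0) m = m * (S - 1).
  rewrite sumr_const cardC1 -mulr_natr /S; congr (_ * _).
  by rewrite -[in RHS](prednK (ltnW T2)) -natr1 addrK.
have SumT1 : \sum_(s | s != s0) r2 * ((m + p s) / 2 * l + (m - p s))
             = r2 * (S / 2 * m * l + (S - 2) * m).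
  rewrite -mulr_sumr; congr (_ * _).
  have e1 : \sum_(s | s != s0) (m + p s) = m * (S - 1) + m.
    by rewrite big_split /= cm -hm.
  have e2 : \sum_(s | s != s0) (m - p s) = m * (S - 1) - m.
    by rewrite sumrB cm -hm.
  rewrite big_split /= -!mulr_suml.
  rewrite e1.
  rewrite e2.
  ring.
have SX : Num.sqrt V * \sum_s (Num.sqrt (p s) * L s) =
    Num.sqrt V * Num.sqrt q * L s0 + \sum_(s | s != s0) Num.sqrt V * Num.sqrt (p s) * L s.
  rewrite mulr_sumr (bigD1 s0) //= mulrA; congr (_ + _).
  by apply: eq_bigr => i _; rewrite mulrA.
have X1 : Num.sqrt V * \sum_s (Num.sqrt (p s) * L s) <= sg * A + r2 * (S / 2 * B + (S - 2) * m).
  rewrite SX; apply: lerD => //.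
  apply: le_trans (_ : _ <= \sum_(s | s != s0) r2 * ((m + p s) / 2 * l + (m - p s))) _.
    by apply: ler_sum => s ss; apply: T1.
  rewrite SumT1; apply: ler_wpM2l => //; rewrite lerD2r -mulrA; apply: ler_wpM2l => //.
  by apply: divr_ge0 => //; lra.
have X2 : r2 * (S / 2 * B + (S - 2) * m) <= 17/12 * (S / 2 * B + (S - 2) * (A + B)).
  apply: ler_pM => //.
    by apply: addr_ge0; apply: mulr_ge0 => //; [apply: divr_ge0|]; lra.
  rewrite lerD2l; apply: ler_wpM2l; first lra.
  by rewrite -HAB; apply: le_trans F5.
have S2' : 2 <= sg^+2 by rewrite sgS.
have cc1 := @c1 sg sg0 S2'.
have cc2 := @c2 sg sg0 S2'.
rewrite sgS in cc1 cc2.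
have P1 := ler_wpM2l A0 cc1.
have P2 := ler_wpM2l B0 cc2.
change (Num.sqrt V * \sum_s (Num.sqrt (p s) * L s) + V <= S * sg * H).
rewrite HAB.
have F5' : V <= A + B by rewrite -HAB.
lra.
Qed.
End Analytic.


Section Main.
Variables (R : realType) (T : finType) (d : T -> R).
Hypothesis hd0 : forall s, 0 <= d s.
Hypothesis hd1 : \sum_(s : T) d s = 1.

Lemma H0_of_01 (p : T -> R) : (forall s, p s = 0 \/ p s = 1) -> entropy p = 0.
Proof.
move=> h; rewrite /entropy big1 ?oppr0 // => s _.
by case: (h s) => ->; rewrite ?mul0r ?ln1 ?mulr0.
Qed.

Lemma var0_H0 : cat_var d = 0 -> entropy d = 0.
Proof.
move=> v0; apply: H0_of_01 => s.
have := @psumr_eq0P R T predT (fun s => d s * (1 - d s)) _ v0 s isT.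
move=> /(_ _) h.
have : d s * (1 - d s) = 0.
  apply: h => i _; apply: mulr_ge0 => //; have := @d_le1 R T d hd0 hd1 i; lra.
move/eqP; rewrite mulf_eq0 => /orP[/eqP -> | ]; first by left.
by rewrite subr_eq0 => /eqP <-; right.
Qed.

Lemma card_gt1_of_H : 0 < entropy d -> (1 < #|T|)%N.
Proof.
move=> Hp; rewrite ltnNge; apply/negP => /fintype_le1P h.
suff : entropy d = 0 by move=> e; rewrite e ltxx in Hp.
apply: H0_of_01 => s; right.
rewrite -hd1 (big_pred1 s) // => t; rewrite /= (h s t) eqxx.
by [].
Qed.

Lemma entropy_ge0 (p : T -> R) : (forall s, 0 <= p s) -> (forall s, p s <= 1) ->
  0 <= entropy p.
Proof.
move=> p0 p1; rewrite /entropy -sumrN; apply: sumr_ge0 => s _.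
rewrite -mulrN; apply: mulr_ge0 => //; rewrite oppr_ge0; exact: ln_le0.
Qed.

Variable n : nat.
Hypothesis hn : (0 < n)%N.

Lemma emp_ge0 (x : {ffun 'I_n -> T}) s : 0 <= empirical R x s.
Proof. by rewrite /empirical divr_ge0 // ler0n. Qed.

Lemma emp_sum (x : {ffun 'I_n -> T}) : \sum_s empirical R x s = 1.
Proof.
have n0 : (n%:R : R) != 0 by rewrite pnatr_eq0 -lt0n.
rewrite /empirical -mulr_suml.
have -> : \sum_s (#|[set j | x j == s]|%:R : R) = n%:R.
  transitivity (\sum_s \sum_(j < n) ((x j == s)%:R : R)).
    by apply: eq_bigr => s _; rewrite -(@cntE R T n x s).
  rewrite exchange_big /= -[n in RHS]card_ord -sumr_const.
  apply: eq_bigr => j _.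
  rewrite (bigD1 (x j)) //= eqxx big1 ?addr0 // => t tn.
  by rewrite eq_sym (negbTE tn).
by rewrite divff.
Qed.

Lemma emp_le1 (x : {ffun 'I_n -> T}) s : empirical R x s <= 1.
Proof.
rewrite -(emp_sum x) (bigD1 s) //= lerDl; apply: sumr_ge0 => i _; exact: emp_ge0.
Qed.

Lemma w_zero (x : {ffun 'I_n -> T}) s : \prod_(j < n) d (x j) != 0 -> d s = 0 ->
  empirical R x s = 0.
Proof.
move=> w0 ds0; rewrite /empirical.
have [c0|] := eqVneq #|[set j | x j == s]| 0%N; first by rewrite c0 mul0r.
rewrite -lt0n card_gt0 => /set0Pn [j]; rewrite inE => /eqP xj.
by move: w0; rewrite (bigD1 j) //= xj ds0 mul0r eqxx.
Qed.

Lemma part1 (eps : R) : 0 < eps ->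
  \sum_(x : {ffun 'I_n -> T} | eps < entropy d - entropy (empirical R x))
     \prod_(j < n) d (x j)
  <= 2 * (#|T|)%:R * expR (- (n%:R * (eps ^+ 2 * cat_var d)
                              / (2 * (#|T|)%:R ^+ 3 * (entropy d) ^+ 2))).
Proof.
move=> eps0.
set S := (#|T|)%:R : R.
set H := entropy d.
set V := cat_var d.
have S0 : 0 <= S by rewrite /S ler0n.
have rhs0 : 0 <= 2 * S * expR (- (n%:R * (eps ^+ 2 * V) / (2 * S ^+ 3 * H ^+ 2))).
  by apply: mulr_ge0; [apply: mulr_ge0 => //| exact: expR_ge0].
have [Hle|Hlt] := leP H eps.
  rewrite big_pred0 // => x; apply/negbTE; rewrite -leNgt.
  have := @entropy_ge0 (empirical R x) (emp_ge0 x) (emp_le1 x); rewrite -/H; lra.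
have Hp : 0 < H by lra.
have T2 := card_gt1_of_H Hp.
have V0 : 0 <= V.
  rewrite /V /cat_var; apply: sumr_ge0 => s _; apply: mulr_ge0 => //.
  have := @d_le1 R T d hd0 hd1 s; lra.
have S2 : 2 <= S by rewrite /S (ler_nat R 2).
set c := eps ^+ 2 * V / (2 * S ^+ 3 * H ^+ 2).
have c0 : 0 <= c.
  apply: divr_ge0; first by apply: mulr_ge0 => //; exact: sqr_ge0.
  apply: mulr_ge0; last exact: sqr_ge0.
  by apply: mulr_ge0 => //; exact: exprn_ge0.
set a := fun s => Num.sqrt (2 * c * d s).
pose B := fun s (x : {ffun 'I_n -> T}) =>
  (0 < d s) && ((cnt x s)%:R <= n%:R * (d s - a s)).
pose w := fun x : {ffun 'I_n -> T} => \prod_(j < n) d (x j).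
have w0 : forall x, 0 <= w x by (move=> x; apply: prodr_ge0 => j _).
have BND : \sum_s (Num.sqrt (2 * c * d s) * (- ln (d s)) + 2 * c) <= eps.
  have AN := @analytic R T d hd0 hd1 T2.
  rewrite -/S -/V -/H in AN.
  pose sg : R := Num.sqrt S.
  have sg0 : 0 <= sg by exact: sqrtr_ge0.
  have sgS : sg ^+ 2 = S by rewrite sqr_sqrtr.
  have sg1 : 1 <= sg by (rewrite /sg -sqrtr1 ler_sqrt //; lra).
  set X := \sum_s (Num.sqrt (d s) * (- ln (d s))).
  have AN2 : Num.sqrt V * X + V <= S * sg * H := AN.
  clear AN; rename AN2 into AN.
  pose D := S * sg * H.
  have D0 : 0 < D by (rewrite /D mulr_gt0 // mulr_gt0 //; lra).
  pose k := eps * Num.sqrt V / D.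
  have k0 : 0 <= k by (rewrite /k divr_ge0 ?mulr_ge0 ?sqrtr_ge0 //; [lra|lra]).
  have sV : Num.sqrt V ^+ 2 = V by rewrite sqr_sqrtr.
  have Sn0 : S != 0 by (rewrite gt_eqF //; lra).
  have Hn0 : H != 0 by rewrite gt_eqF.
  have sgn0 : sg != 0 by (rewrite gt_eqF //; lra).
  have k2 : 2 * c = k ^+ 2.
    rewrite /k /c /D expr_div_n !exprMn sV sgS; field.
    by rewrite Sn0 Hn0.
  have ea : forall s, Num.sqrt (2 * c * d s) = k * Num.sqrt (d s).
    by move=> s; rewrite k2 sqrtrM ?sqr_ge0 // sqrtr_sqr ger0_norm.
  rewrite (eq_bigr (fun s => k * (Num.sqrt (d s) * (- ln (d s))) + 2 * c)); last first.
    by move=> s _; rewrite ea -mulrA.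
  have eS : \sum_(s : T) (2 * c) = 2 * c * S by rewrite sumr_const /S mulr_natr.
  rewrite big_split /= -mulr_sumr -/X eS.
  have kX : k * X <= eps - eps * V / D.
    have e1 : k * X = eps / D * (Num.sqrt V * X) by (rewrite /k; field; rewrite gt_eqF //).
    rewrite e1; apply: le_trans (_ : _ <= eps / D * (D - V)) _.
      apply: ler_wpM2l; first by rewrite divr_ge0 //; lra.
      rewrite /D; lra.
    rewrite le_eqVlt; apply/orP; left; apply/eqP; field; rewrite gt_eqF //.
  have k2S : 2 * c * S = eps ^+ 2 * V * S / D ^+ 2.
    by rewrite k2 /k expr_div_n exprMn sV; field; rewrite gt_eqF //.
  have key : eps ^+ 2 * V * S / D ^+ 2 <= eps * V / D.
    rewrite ler_pdivrMr ?exprn_gt0 //.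
    have -> : eps * V / D * D ^+ 2 = (eps * V) * D by (field; rewrite gt_eqF //).
    have -> : eps ^+ 2 * V * S = (eps * V) * (eps * S) by ring.
    apply: ler_wpM2l; first by apply: mulr_ge0 => //; lra.
    rewrite /D.
    have : eps * S <= H * S by (apply: ler_wpM2r => //; lra).
    have : H * S <= S * sg * H.
      rewrite mulrC -mulrA [sg * H]mulrC mulrA; rewrite -[leLHS]mulr1 ler_wpM2l //.
      by apply: mulr_ge0 => //; lra.
    lra.
  lra.
have DET : forall x, (forall s, ~~ B s x) -> w x != 0 ->
    entropy d - entropy (empirical R x) <= eps.
  move=> x nB wx.
  apply: le_trans (@det_bound R T d (empirical R x) c hd0 hd1 (emp_ge0 x) (emp_sum x) c0 _ _) BND.
    by move=> s; exact: w_zero.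
  move=> s ds0; have := nB s; rewrite /B ds0 /= -ltNge => h.
  rewrite /empirical ltr_pdivlMr ?ltr0n // mulrC; exact: h.
have PW : forall x, eps < H - entropy (empirical R x) -> w x <= \sum_s w x * (B s x)%:R.
  move=> x hx.
  have [wz|wnz] := eqVneq (w x) 0.
    by rewrite wz; apply: sumr_ge0 => s _; rewrite mul0r.
  case: (boolP [exists s, B s x]) => [/existsP [s hs]|/existsPn nB].
    rewrite (bigD1 s) //= hs mulr1 lerDl; apply: sumr_ge0 => t _.
    by apply: mulr_ge0 => //; rewrite ler0n.
  by have := DET x nB wnz; rewrite -/H; lra.
apply: le_trans (_ : _ <= \sum_x \sum_s w x * (B s x)%:R) _.
  rewrite [leRHS](bigID (fun x : {ffun 'I_n -> T} => eps < H - entropy (empirical R x))) /=.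
  rewrite -[leLHS]addr0; apply: lerD.
    by apply: ler_sum => x hx; apply: PW.
  apply: sumr_ge0 => x _; apply: sumr_ge0 => s _; apply: mulr_ge0 => //; rewrite ler0n.
rewrite exchange_big /=.
apply: le_trans (_ : _ <= \sum_(s : T) expR (- (n%:R * c))) _.
  apply: ler_sum => s _.
  rewrite (eq_bigr (fun x => if B s x then w x else 0)); last first.
    by move=> x _; case: (B s x); rewrite ?mulr1 ?mulr0.
  rewrite -big_mkcond /=.
  have [dp|dn] := boolP (0 < d s); last first.
    by rewrite big_pred0 ?expR_ge0 // => x; rewrite /B (negbTE dn).
  rewrite /B dp /=.
  apply: le_trans (@chernoff_tail R T d hd0 hd1 n s (a s) dp (sqrtr_ge0 _)) _.
  have -> : a s ^+ 2 / (2 * d s) = c.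
    rewrite /a sqr_sqrtr; last by apply: mulr_ge0 => //; apply: mulr_ge0.
    have dn0 : d s != 0 by rewrite gt_eqF.
    clearbody c; field; exact: dn0.
  by [].
have eS : \sum_(s : T) expR (- (n%:R * c)) = S * expR (- (n%:R * c)).
  by rewrite sumr_const /S [RHS]mulr_natl.
rewrite eS.
have -> : n%:R * (eps ^+ 2 * V) / (2 * S ^+ 3 * H ^+ 2) = n%:R * c by rewrite /c [RHS]mulrA.
have := expR_ge0 (- (n%:R * c)).
nra.
Qed.

Lemma part0 (eps : R) : entropy d <= eps ->
  \sum_(x : {ffun 'I_n -> T} | eps < entropy d - entropy (empirical R x))
     \prod_(j < n) d (x j) = 0.
Proof.
move=> h; rewrite big_pred0 // => x; apply/negbTE; rewrite -leNgt.
have := @entropy_ge0 (empirical R x) (emp_ge0 x) (emp_le1 x); lra.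
Qed.

End Main.

Theorem theorem4p1 (R : realType) (T : finType) (d : T -> R)
  (hd0 : forall s, 0 <= d s) (hd1 : \sum_(s : T) d s = 1)
  (n : nat) (hn : (0 < n)%N) (eps : R) (heps : 0 < eps) :
  let P := iid_prob d
             (fun x : {ffun 'I_n -> T} =>
                entropy d - entropy (empirical R x) > eps) in
  let S := (#|T|)%:R : R in
  P <= 2 * S * expR (- (n%:R * (eps ^+ 2 * cat_var d)
                              / (2 * S ^+ 3 * (entropy d) ^+ 2)))
  /\ (forall delta : R, 0 < delta < 1 ->
        n%:R >= 2 * S ^+ 3 * (entropy d) ^+ 2 / (eps ^+ 2 * cat_var d)
                * ln (2 * S / delta) ->
        P <= delta).
Proof.
move=> P S.
have P1 : P <= 2 * S * expR (- (n%:R * (eps ^+ 2 * cat_var d)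
                              / (2 * S ^+ 3 * (entropy d) ^+ 2))).
  exact: (@part1 R T d hd0 hd1 n hn eps heps).
split => // delta /andP[dl0 dl1] hN.
set H := entropy d in P1 hN.
set V := cat_var d in P1 hN.
have [Hle|Hlt] := leP H eps.
  have := @part0 R T d n hn eps Hle; rewrite -/H => P0.
  rewrite /P /iid_prob P0; lra.
have Hp : 0 < H by lra.
have T2 := @card_gt1_of_H R T d hd1 Hp.
have S2 : 2 <= S by rewrite /S (ler_nat R 2).
have V0 : 0 <= V.
  rewrite /V /cat_var; apply: sumr_ge0 => s _; apply: mulr_ge0 => //.
  have := @d_le1 R T d hd0 hd1 s; lra.
have Vp : 0 < V.
  rewrite lt_def V0 andbT; apply/eqP => v0.
  have := @var0_H0 R T d hd0 hd1 v0; rewrite -/H => h; lra.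
pose A := eps ^+ 2 * V / (2 * S ^+ 3 * H ^+ 2).
have Ap : 0 < A.
  rewrite /A divr_gt0 // ?mulr_gt0 // ?exprn_gt0 //; lra.
have eA : 2 * S ^+ 3 * H ^+ 2 / (eps ^+ 2 * V) = A^-1 by rewrite /A invf_div.
rewrite eA in hN.
have hN2 : ln (2 * S / delta) <= n%:R * A.
  have := ler_wpM2r (ltW Ap) hN.
  by rewrite mulrAC mulVf ?gt_eqF // mul1r.
have e1 : n%:R * (eps ^+ 2 * V) / (2 * S ^+ 3 * H ^+ 2) = n%:R * A by rewrite /A [RHS]mulrA.
rewrite e1 in P1.
apply: le_trans P1 _.
have q0 : 0 < 2 * S / delta by rewrite divr_gt0 //; lra.
have : expR (- (n%:R * A)) <= expR (- ln (2 * S / delta)) by rewrite ler_expR lerN2.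
rewrite [leRHS]expRN lnK ?posrE // invf_div => h.
have S0 : 0 < 2 * S by lra.
apply: le_trans (_ : _ <= 2 * S * (delta / (2 * S))) _.
  by apply: ler_wpM2l => //; lra.
rewrite mulrC -mulrA mulVf ?mulr1 //; rewrite gt_eqF //.
Qed.
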